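(* For $M\geq1$ let $T_M$ denote the number of pairs $((d_1,\ldots,d_M),\tau)$ where $(d_1,\ldots,d_M)$ is an integer sequence with $d_j\in\{1,-1,-2,-3,\ldots\}$ for all $j$, $\sum_{j=1}^k d_j\geq1$ for all $1\leq k\leq M$, and $\sum_{j=1}^M d_j=1$, and $\tau$ is a function assigning to each index $j$ with $d_j\leq -2$ a value $\tau(j)\in\{1,2,3,4\}$ (and is undefined on the other indices). Then $T_M=o(4^M)$ as $M\to\infty$. *)

(* Defs.v *)
From HB Require Import structures.
From mathcomp Require Import all_boot all_order all_algebra.
Set Implicit Arguments. Unset Strict Implicit. Unset Printing Implicit Defensive.
Import Order.TTheory GRing.Theory Num.Theory.
Local Open Scope ring_scope.

Definition step_ok (x : int) : bool := (x == 1) || (x <= -1).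

Definition valid_seq (M : nat) (d : seq int) : bool :=
  [&& size d == M,
      all step_ok d,
      [forall k : 'I_M.+1, (1 <= k)%N ==> (1 <= \sum_(x <- take k d) x)]
    & \sum_(x <- d) x == 1].

(* tau is encoded as a finite function 'I_M -> option 'I_4 (index j : 'I_M
   stands for j+1; value Some t stands for t+1 in {1,2,3,4}); it is defined
   (Some _) exactly at the indices j with d_j <= -2 and undefined (None)
   elsewhere. *)
Definition valid_pair (M : nat) (p : seq int * {ffun 'I_M -> option 'I_4}) : bool :=
  valid_seq M p.1 &&
  [forall j : 'I_M, (p.2 j != None) == (nth 0 p.1 j <= -2)].

Definition pairs (M : nat) := {p : seq int * {ffun 'I_M -> option 'I_4} | valid_pair p}.

Definition has_card (A : Type) (n : nat) : Prop :=
  exists f : 'I_n -> A, bijective f.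

(* Main.v *)
Require Import Defs.
From HB Require Import structures.
From mathcomp Require Import all_boot all_order all_algebra.
Import Order.TTheory GRing.Theory Num.Theory.
Set Implicit Arguments. Unset Strict Implicit.
Local Open Scope ring_scope.

Definition E (n : nat) : finType := (('I_n * 'I_4) + bool)%type.
Definition xv n (e : E n) : int :=
  match e with inr true => 1 | inr false => -1 | inl (i, _) => - ((i : nat)%:Z + 2) end.

Definition w : rat := 2%:R / 5%:R.
Definition cc : rat := 119%:R / 30%:R.
Definition g n (e : E n) : rat :=
  match e with inr true => w^-1 | inr false => w | inl (i, _) => w ^+ (i : nat).+2 end.

Definition enc M (p : seq int * {ffun 'I_M -> option 'I_4}) : {ffun 'I_M -> E M.+1} :=
 [ffun j => match p.2 j with
   | Some t => inl (inord (absz (nth 0 p.1 j) - 2), t)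
   | None => if nth 0 p.1 j == 1 then inr true else inr false end].

Lemma sum_le_size (s : seq int) : all step_ok s -> \sum_(x <- s) x <= (size s)%:Z.
Proof.
elim: s => [|x s IH] /=; first by rewrite big_nil.
case/andP=> hx hs; rewrite big_cons -add1n PoszD lerD //; last exact: IH.
by case/orP: hx => [/eqP -> //| h]; apply: le_trans h _.
Qed.

Lemma step_lb M d j : valid_seq M d -> (j < M)%N -> - (M%:Z) <= nth 0 d j.
Proof.
case/and4P=> /eqP hs ha /forallP hk _ hj.
have hj1 : (j.+1 < M.+1)%N by [].
have := hk (Ordinal hj1); rewrite /=.
rewrite (take_nth 0) ?hs // -cats1 big_cat big_seq1 /=.
have hS : \sum_(x <- take j d) x <= j%:Z.
  have := @sum_le_size (take j d); rewrite size_take hs hj.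
  apply; by rewrite -(cat_take_drop j d) all_cat in ha; case/andP: ha.
move=> h. idtac.
have : 1 - j%:Z <= nth 0 d j.
  by rewrite lerBlDr addrC; apply: (le_trans h); rewrite lerD2r.
apply: le_trans; rewrite lerBrDr addrC -lerBrDr opprK -PoszD lez_nat.
by apply: leq_trans (ltnW hj) _; rewrite leq_addl.
Qed.

Lemma enc_val M p (j : 'I_M) : valid_pair p -> xv (enc p j) = nth 0 p.1 j.
Proof.
case/andP=> hv /forallP /(_ j) /eqP ht.
have hb := step_lb hv (ltn_ord j).
have hok : step_ok (nth 0 p.1 j).
  case/and4P: hv => /eqP hs ha _ _; apply: (allP ha); apply: mem_nth; by rewrite hs.
rewrite ffunE; move: ht hb hok; case: (p.2 j) => [t|] /= ht;
  case: (nth 0 p.1 j) ht => [n|k] //= ht hb hok.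
- rewrite (@inordK M); last first.
    move: hb; rewrite NegzE lerN2 lez_nat => hb.
    by apply: leq_ltn_trans (leq_subr _ _) _; rewrite ltnS.
  have hk : (1 <= k)%N by case: k ht {hb hok}.
  rewrite NegzE; congr (- _); rewrite subn2 /=.
  case: k hk {ht hb hok} => [|k] //= _.
  by rewrite -(addn2 k) PoszD.
- by case/orP: hok => [/eqP ->|].
- by case: k ht {hok hb} => [|k].
Qed.

Lemma enc_inj M (p q : seq int * {ffun 'I_M -> option 'I_4}) :
  valid_pair p -> valid_pair q -> enc p = enc q -> p = q.
Proof.
move=> hp hq he.
have hd : p.1 = q.1.
  have /andP[/and4P[/eqP sp _ _ _] _] := hp.
  have /andP[/and4P[/eqP sq _ _ _] _] := hq.
  apply: (@eq_from_nth _ 0); first by rewrite sp sq.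
  move=> i; rewrite sp => hi.
  by rewrite -[i]/(nat_of_ord (Ordinal hi)) -(enc_val _ hp) -(enc_val _ hq) he.
case: p q hp hq he hd => [d tp] [d' tq] /= hp hq he hd; subst d'.
congr pair; apply/ffunP=> j.
have /andP[_ /forallP /(_ j) /eqP htp] := hp.
have /andP[_ /forallP /(_ j) /eqP htq] := hq.
have := congr1 (fun F : {ffun 'I_M -> E M.+1} => F j) he; rewrite !ffunE /=.
move: htp htq => /= htp htq.
move: htp htq; case: (tp j) => [t|]; case: (tq j) => [t'|] //=.
- by move=> _ _ [->].
- by move=> h1 h2; rewrite -h1 in h2.
- by move=> h1 h2; rewrite -h1 in h2.
Qed.

Lemma enc_sum M p : valid_pair p -> \sum_(j < M) xv (enc p j) = 1.
Proof.
move=> hp; have /andP[/and4P[/eqP sp _ _ /eqP s1] _] := hp.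
under eq_bigr => j _ do rewrite (enc_val _ hp).
by rewrite -s1 (big_nth 0) sp big_mkord.
Qed.
Lemma w_neq0 : w != 0. Proof. by vm_compute. Qed.
Lemma w_ge0 : 0 <= w. Proof. by vm_compute. Qed.
Lemma w_le1 : w <= 1. Proof. by vm_compute. Qed.

Lemma g_exp n (e : E n) : g e = w ^ (- xv e).
Proof.
case: e => [[i t]|[|]] /=.
- by rewrite opprK -[_ + 2]/(Posz (i + 2)) addn2.
- by rewrite exprN1.
- by rewrite opprK expr1z.
Qed.

Lemma g_ge0 n (e : E n) : 0 <= g e.
Proof. rewrite g_exp; exact: (exprz_ge0 _ w_ge0). Qed.

Lemma geom n : \sum_(i < n) w ^+ i <= 5%:R / 3%:R.
Proof.
elim: n => [|n IH]; first by rewrite big_ord0; vm_compute.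
rewrite big_ord_recl expr0.
under eq_bigr => i _ do rewrite /bump /= exprS.
rewrite -mulr_sumr.
have h1 : w * \sum_(i < n) w ^+ i <= w * (5%:R / 3%:R) := ler_wpM2l w_ge0 IH.
apply: (@le_trans _ _ (1 + w * (5%:R / 3%:R))); first by rewrite lerD2l.
by vm_compute.
Qed.

Lemma sum_g n : \sum_(e : E n) g e <= cc.
Proof.
rewrite big_sumType big_bool /=.
have -> : \sum_(p : 'I_n * 'I_4) g (inl p : E n) =
    \sum_(i : 'I_n) \sum_(t : 'I_4) g (inl (i, t) : E n).
  by rewrite pair_bigA; apply: eq_bigr => -[].
rewrite /=.
under eq_bigr => i _ do rewrite sumr_const card_ord -mulr_natr.
rewrite -mulr_suml.
have h : \sum_(i < n) w ^+ i.+2 <= 4%:R / 15%:R.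
  under eq_bigr => i _ do rewrite exprSr exprSr -mulrA mulrC.
  rewrite -mulr_sumr.
  apply: le_trans (ler_wpM2l _ (geom n)) _.
    by vm_compute.
  by vm_compute.
apply: (@le_trans _ _ ((4%:R / 15%:R) * 4%:R + (w^-1 + w))).
  by rewrite lerD2r ler_wpM2r.
by vm_compute.
Qed.

Lemma cc_ge0 : 0 <= cc. Proof. by vm_compute. Qed.
Lemma prod_const (c : rat) m : c ^+ m = \prod_(j < m) c.
Proof.
elim: m => [|m IH]; first by rewrite big_ord0 expr0.
by rewrite big_ord_recr -IH exprSr.
Qed.

Lemma count_bound M :
  (#|[pred F : {ffun 'I_M -> E M.+1} | \sum_j xv (F j) == 1]|)%:R <= cc ^+ M.
Proof.
rewrite -sum1_card natr_sum.
apply: le_trans (_ : \sum_(F : {ffun 'I_M -> E M.+1}) w * \prod_j g (F j) <= _).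
  rewrite big_mkcond /=; apply: ler_sum => F _.
  have hp : \prod_j g (F j) = w ^ (- \sum_j xv (F j)).
    rewrite (big_morph (fun z : int => w ^ (- z)) (id1 := 1) (op1 := *%R)); last first.
    - by rewrite oppr0 expr0z.
    - by move=> a b; rewrite opprD expfzDr // w_neq0.
    by apply: eq_bigr => j _; rewrite g_exp.
  rewrite hp; case: ifP => [/eqP ->|_].
    by rewrite exprN1 mulfV ?w_neq0.
  by rewrite mulr_ge0 ?exprz_ge0 ?w_ge0.
rewrite -mulr_sumr -(bigA_distr_bigA (fun (j : 'I_M) (e : E M.+1) => g e)) /=.
apply: le_trans (ler_wpM2l w_ge0 (_ : _ <= cc ^+ M)) _.
  rewrite prod_const.
  apply: ler_prod => j _.
  by rewrite sumr_ge0 ?sum_g // => e _; rewrite g_ge0.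
rewrite -[X in _ <= X]mul1r ler_wpM2r ?w_le1 //.
exact: (exprn_ge0 _ cc_ge0).
Qed.

Lemma bern (a : rat) n : 0 <= a -> 1 + a *+ n <= (1 + a) ^+ n.
Proof.
move=> ha; elim: n => [|n IH]; first by rewrite mulr0n addr0 expr0.
rewrite exprS mulrS.
apply: (@le_trans _ _ ((1 + a) * (1 + a *+ n))); last first.
  by rewrite ler_wpM2l // addr_ge0.
rewrite mulrDl mul1r mulrDr mulr1 addrA addrAC lerD2l lerDl.
by rewrite mulr_ge0 // mulrn_wge0.
Qed.

Lemma card_step M T (hT : has_card (pairs M) T) :
  (T <= #|[pred F : {ffun 'I_M -> E M.+1} | (\sum_j xv (F j) == 1)%R]|)%N.
Proof.
case: hT => f fb.
pose h (i : 'I_T) : {F : {ffun 'I_M -> E M.+1} | \sum_j xv (F j) == 1} :=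
  exist _ (enc (sval (f i))) (introT eqP (enc_sum (svalP (f i)))).
have hi : injective h.
  move=> i j /(congr1 sval) /= he.
  apply: (bij_inj fb); apply: val_inj.
  exact: enc_inj (svalP (f i)) (svalP (f j)) he.
by have := leq_card _ hi; rewrite card_ord card_sig.
Qed.

Unset Implicit Arguments.

Theorem mainTheorem7 (T : nat -> nat)
  (hT : forall M : nat, (1 <= M)%N -> has_card (pairs M) (T M)) :
  forall eps : rat, 0 < eps ->
    exists N : nat, forall M : nat, (N <= M)%N ->
      (T M)%:R <= eps * 4%:R ^+ M.
Proof.
move=> eps heps.
have hie : 0 <= eps^-1 by rewrite invr_ge0 ltW.
have hK := archi_boundP hie.
set K := Num.Def.archi_bound _ in hK; clearbody K.
exists (119 * K).+1 => M hM.
have hM1 : (1 <= M)%N by apply: leq_trans hM.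
apply: (@le_trans _ _ (cc ^+ M)).
  apply: le_trans (count_bound M).
  by rewrite ler_nat; apply: card_step; apply: hT.
pose a : rat := 1 / 119%:R.
have h4 : (4%:R : rat) = cc * (1 + a) by vm_compute.
have ha : 0 <= a by vm_compute.
rewrite h4 [(cc * _) ^+ _]exprMn mulrCA.
apply: ler_peMr; first exact: (exprn_ge0 _ cc_ge0).
have hepsK : 1 <= eps * K%:R.
  apply: (@le_trans _ _ (eps * eps^-1)); first by rewrite mulfV ?lt0r_neq0.
  exact: (ler_wpM2l (ltW heps) (ltW hK)).
apply: le_trans hepsK _; apply: (ler_wpM2l (ltW heps)).
apply: le_trans (bern M ha); apply: (@le_trans _ _ (a *+ M)); last first.
  rewrite lerDr; exact: ler01.
have -> : (K%:R : rat) = a *+ (119 * K).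
  have e : a *+ 119 = 1 by vm_compute.
  by rewrite mulrnA e.
apply: (ler_wpMn2l ha); exact: ltnW.
Qed.
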